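(* The greedy algorithm Degree (with $r=1$) is not an approximation algorithm for Minimum Congestion Dominating Set: for every real $c\ge 1$ there exist a graph $G$ and an execution of Degree on $G$ (i.e., a choice of tie-breaking) whose output $D$ satisfies $\overline{\mathrm{cong}}(D)>c\cdot\mathrm{mac}(G)$. In fact, for every $k\ge 2$, on the graph obtained from the complete bipartite graph $K_{k,k}$ with sides $A,B$ by attaching one pendant leaf to each vertex of $A\cup B$ (so $n=4k$), some execution outputs $D=A\cup B$ with $\overline{\mathrm{cong}}(D)=n/8+1$, while $\mathrm{mac}(G)=1$.
   Context: For $r=1$: a dominating set of $G=(V,E)$ is $D\subseteq V$ with $N[D]=V$ ($N[\cdot]$ closed neighborhood). The average congestion of $S$ is $\overline{\mathrm{cong}}(S)=\frac{1}{|V|}\sum_{x\in V}|N[x]\cap S|$ and $\mathrm{mac}(G)$ is its minimum over dominating sets. The algorithm Degree starts with $D=\emptyset$ and, while $N[D]\ne V$, adds to $D$ a vertex $v$ maximizing $|N[v]\setminus N[D]|$, breaking ties arbitrarily; it outputs $D$. *)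

(* Defs.v *)
From HB Require Import structures.
From mathcomp Require Import all_boot all_order all_algebra.
From mathcomp Require Import reals.
Set Implicit Arguments. Unset Strict Implicit. Unset Printing Implicit Defensive.
Import Order.TTheory GRing.Theory Num.Theory.
Local Open Scope ring_scope.

Section Graphs.
Variable T : finType.
Variable e : rel T.

Definition Nc (x : T) : {set T} := [set y | (y == x) || e x y].
Definition NS (S : {set T}) : {set T} := \bigcup_(x in S) Nc x.

Definition dominating (D : {set T}) : bool := NS D == [set: T].

Definition cong (S : {set T}) : rat :=
  (#|T|%:R)^-1 * \sum_(x : T) (#|Nc x :&: S|)%:R.

(* mac(G): minimum average congestion over dominating sets
   ([set: T] is always dominating, so it serves as the neutral start). *)
Definition mac : rat :=
  \big[Num.min/cong [set: T]]_(S : {set T} | dominating S) cong S.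

Definition gain (D : {set T}) (v : T) : nat := #|Nc v :\: NS D|.

(* s is the sequence of vertices picked by some execution of Degree
   (some tie-breaking): at each step the current set is not dominating and the
   chosen vertex maximizes the gain; at the end the set is dominating. *)
Definition degree_execution (s : seq T) : Prop :=
  (forall (p q : seq T) (v : T), s = p ++ v :: q ->
     ~~ dominating [set x in p] /\
     forall w : T, (gain [set x in p] w <= gain [set x in p] v)%N)
  /\ dominating [set x in s].

Definition degree_output (s : seq T) : {set T} := [set x in s].
End Graphs.

(* K_{k,k} with sides A = {((i,false),false)} and B = {((i,true),false)},
   plus a pendant leaf ((i,b),true) attached to each vertex ((i,b),false). *)
Definition kkl_vertex (k : nat) : finType := (('I_k * bool) * bool)%type.

Definition kkl_edge (k : nat) : rel (kkl_vertex k) :=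
  fun u v =>
    [|| [&& ~~ u.2, ~~ v.2 & u.1.2 != v.1.2]
      | (u.1 == v.1) && (u.2 != v.2)].

Definition kkl_core (k : nat) : {set kkl_vertex k} := [set v | ~~ v.2].

(* Main.v *)
Require Import Defs.
From HB Require Import structures.
From mathcomp Require Import all_boot all_order all_algebra.
From mathcomp Require Import reals ring lra zify.
Import Order.TTheory GRing.Theory Num.Theory.
Local Open Scope ring_scope.
Section Gen.
Variables (T : finType) (e : rel T).
Hypothesis esym : symmetric e.

Lemma in_NS S y : (y \in NS e S) = [exists x in S, y \in Nc e x].
Proof.
apply/bigcupP/existsP => [[x xS yx]|[x /andP[xS yx]]]; exists x => //.
by rewrite xS.
Qed.

Lemma cong_ge1 S : (0 < #|T|)%N -> dominating e S -> 1 <= cong e S.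
Proof.
move=> T0 /eqP dS; rewrite /cong.
have H : forall x, (1 <= #|Nc e x :&: S|)%N.
  move=> x; have : x \in NS e S by rewrite dS inE.
  rewrite in_NS => /existsP[y /andP[yS xy]].
  apply/card_gt0P; exists y; rewrite !inE yS andbT.
  move: xy; rewrite !inE => /orP[/eqP->|exy]; first by rewrite eqxx.
  by rewrite esym exy orbT.
have hs : \sum_(x : T) (1 : rat) <= \sum_x (#|Nc e x :&: S|)%:R.
  by apply: ler_sum => x _; rewrite ler1n H.
rewrite sumr_const in hs.
have Tn : (#|T|%:R : rat) != 0 by rewrite pnatr_eq0 -lt0n.
rewrite -[X in X <= _](mulVf Tn) ler_pM2l // invr_gt0 ltr0n //.
Qed.

Lemma dom_setT : dominating e [set: T].
Proof.
apply/eqP/setP => x; rewrite inE in_NS; apply/existsP; exists x; by rewrite !inE eqxx.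
Qed.

Lemma mac_ge1 : (0 < #|T|)%N -> 1 <= mac e.
Proof.
move=> T0; rewrite /mac; apply: (big_ind (fun x => 1 <= x)).
- exact: cong_ge1 T0 dom_setT.
- by move=> x y hx hy; rewrite le_min hx hy.
- by move=> S dS; apply: cong_ge1.
Qed.

Lemma mac_le S : dominating e S -> mac e <= cong e S.
Proof. by move=> dS; rewrite /mac (bigD1 S) //= ge_min lexx. Qed.
End Gen.
Section K.
Variable k : nat.
Notation V := (kkl_vertex k).
Notation E := (@kkl_edge k).

Definition side (b : bool) : {set V} := setX (setX [set: 'I_k] [set b]) [set false].

Lemma Nc_leaf (y : 'I_k * bool) : Nc E (y,true) = [set (y,true); (y,false)].
Proof.
apply/setP => -[[j b] l]; case: y => i c.
rewrite !inE /kkl_edge /= !xpair_eqE.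
by case: l; case: b; case: c; rewrite /= ?andbT ?andbF ?orbF // eq_sym.
Qed.

Lemma Nc_core (y : 'I_k * bool) :
  Nc E (y,false) = (y,true) |: ((y,false) |: side (~~ y.2)).
Proof.
apply/setP => -[[j b] l]; case: y => i c.
rewrite !inE /kkl_edge /= !xpair_eqE.
by case: l; case: b; case: c; rewrite /= ?andbT ?andbF ?orbF ?orbT // eq_sym.
Qed.

Lemma card_side b : #|side b| = k.
Proof. by rewrite /side !cardsX cardsT card_ord !cards1 !muln1. Qed.

Lemma card_Nc_core y : #|Nc E (y,false)| = k.+2.
Proof.
rewrite Nc_core !cardsU1 card_side !inE /= !xpair_eqE /=.
case: y => i [] /=; rewrite ?andbF ?andbT //.
Qed.

Lemma leaf_in_Nc w z : (z,true) \in Nc E w -> z = w.1.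
Proof.
case: w => x []; rewrite ?Nc_leaf ?Nc_core !inE !xpair_eqE /=.
  by case/orP => /andP[/eqP].
by rewrite !andbF !orbF => /andP[/eqP].
Qed.

Lemma leaf_NS (P : {set V}) y : (forall u, u \in P -> ~~ u.2) ->
  ((y,true) \in NS E P) = ((y,false) \in P).
Proof.
move=> Pc; rewrite in_NS; apply/existsP/idP => [[u /andP[uP yu]]|yP].
  move/leaf_in_Nc: (yu) => ->; case: u uP yu Pc => x l uP _ Pc.
  by move: (Pc _ uP) => /= /negbTE l0; rewrite -l0.
exists (y,false); rewrite yP Nc_core !inE eqxx //.
Qed.

Lemma core_NS (P : {set V}) (i0 : 'I_k) y : ((i0,false),false) \in P -> ((i0,true),false) \in P ->
  (y,false) \in NS E P.
Proof.
move=> aP bP; rewrite in_NS; apply/existsP; exists ((i0, ~~ y.2), false).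
rewrite Nc_core !inE /= negbK; case: y => j c; case: c; rewrite ?aP ?bP /= ?eqxx ?orbT //.
Qed.

Lemma step3 (P : {set V}) (i0 : 'I_k) x :
  (forall u, u \in P -> ~~ u.2) ->
  ((i0,false),false) \in P -> ((i0,true),false) \in P -> (x,false) \notin P ->
  ~~ dominating E P /\ forall w, (gain E P w <= gain E P (x,false))%N.
Proof.
move=> Pc aP bP xP.
have lx : (x,true) \notin NS E P by rewrite leaf_NS.
split.
  apply/negP => /eqP dP; move: lx; by rewrite dP inE.
move=> w; apply: (@leq_trans 1).
  rewrite /gain -(cards1 (w.1,true)); apply: subset_leq_card.
  apply/subsetP => -[z l]; rewrite in_setD => /andP[nNS inNc].
  case: l nNS inNc => [nNS inNc|]; last by rewrite (@core_NS P i0 z aP bP).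
  by rewrite (@leaf_in_Nc w z inNc) inE.
rewrite /gain; apply/card_gt0P; exists (x,true).
by rewrite in_setD lx Nc_core !inE eqxx.
Qed.

Lemma tf : (true == false) = false. Proof. by []. Qed.
Lemma ft : (false == true) = false. Proof. by []. Qed.

Ltac fin l b := case: l; case: b; rewrite /= ?andbT ?andbF ?orbF ?orbT ?tf ?ft /= ?negbK ?andbT ?orbF //;
  try (by move=> ->); try (by move=> /eqP->); try (by case/andP => _ ->).

Lemma step1 (i0 : 'I_k) :
  ~~ dominating E set0 /\ forall w, (gain E set0 w <= gain E set0 ((i0,false),false))%N.
Proof.
have N0 : NS E set0 = set0 by rewrite /NS big_set0.
split.
  by apply/negP => /eqP; rewrite N0 => /setP /(_ ((i0,false),false)); rewrite !inE.
move=> w; rewrite /gain N0 !setD0 card_Nc_core.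
case: w => x []; last by rewrite card_Nc_core.
rewrite Nc_leaf cards2; by case: (_ != _).
Qed.

Lemma step2 (i0 : 'I_k) : (2 <= k)%N ->
  ~~ dominating E [set ((i0,false),false)] /\
  forall w, (gain E [set ((i0,false),false)] w <= gain E [set ((i0,false),false)] ((i0,true),false))%N.
Proof.
move=> k2.
have N1 : NS E [set ((i0,false),false)] = Nc E ((i0,false),false) by rewrite /NS big_set1.
set Y : {set V} := setX (setX [set~ i0] [set false]) [set false].
have k1 : k.-1.+1 = k by rewrite prednK // ltnW.
have cY : #|Y| = k.-1 by rewrite /Y !cardsX cardsC1 card_ord !cards1 !muln1.
split.
  apply/negP => /eqP; rewrite N1 => /setP /(_ ((i0,true),true)).
  by rewrite Nc_core !inE /= !xpair_eqE tf /= !andbF.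
have lb : (k <= gain E [set ((i0,false),false)] ((i0,true),false))%N.
  rewrite /gain N1; apply: leq_trans (_ : #|((i0,true),true) |: Y| <= _)%N.
    by rewrite cardsU1 cY !inE tf !andbF /= add1n k1.
  apply: subset_leq_card; apply/subsetP => -[[j b] l].
  rewrite in_setD !Nc_core !inE /= !xpair_eqE.
  by fin l b.
move=> w; apply: leq_trans lb; rewrite /gain N1.
case: w => -[i c] [].
  apply: leq_trans (subset_leq_card (subsetDl _ _)) _.
  by rewrite Nc_leaf cards2; case: (_ != _) => //; apply: leq_trans k2.
case: c.
  apply: leq_trans (_ : #|((i,true),true) |: Y| <= _)%N.
    apply: subset_leq_card; apply/subsetP => -[[j b] l].
    rewrite in_setD !Nc_core !inE /= !xpair_eqE.
    by fin l b.
  by rewrite cardsU1 cY !inE tf !andbF /= add1n k1.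
apply: leq_trans (_ : #|[set ((i,false),true); ((i,false),false)]| <= _)%N.
  apply: subset_leq_card; apply/subsetP => -[[j b] l].
  rewrite in_setD !Nc_core !inE /= !xpair_eqE.
  by fin l b.
by rewrite cards2; case: (_ != _) => //; apply: leq_trans k2.
Qed.

Section Exec.
Variable i0 : 'I_k.
Hypothesis k2 : (2 <= k)%N.

Definition rest : seq V := [seq (x,false) | x <- enum [set x : 'I_k * bool | x.1 != i0]].
Definition sx : seq V := ((i0,false),false) :: ((i0,true),false) :: rest.

Let inj : injective (fun x : 'I_k * bool => (x,false) : V).
Proof. by move=> x y []. Qed.

Lemma mem_rest (u : V) : (u \in rest) = (u.1.1 != i0) && ~~ u.2.
Proof.
case: u => y [].
  rewrite andbF; apply/mapP => -[x _ []] //.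
by rewrite (mem_map inj) mem_enum inE andbT.
Qed.

Lemma sx_core u : (u \in sx) = ~~ u.2.
Proof.
rewrite !in_cons mem_rest; case: u => -[j c] l /=; rewrite !xpair_eqE.
case: l; rewrite /= ?andbF ?andbT //.
by case: c; case: (j =P i0); rewrite ?orbT ?orbF.
Qed.

Lemma sx_uniq : uniq sx.
Proof.
rewrite /sx /= !mem_rest !in_cons /= eqxx /= ?negbK.
rewrite mem_rest /= eqxx !xpair_eqE ft /= (map_inj_uniq inj) enum_uniq.
by rewrite andbF.
Qed.

Lemma sx_exec : degree_execution E sx.
Proof.
split; last first.
  apply/eqP/setP => u; rewrite inE in_NS; apply/existsP; exists (u.1,false).
  rewrite inE sx_core /= Nc_core; case: u => y [] /=; by rewrite !inE eqxx ?orbT.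
move=> p q v; case: p => [|x1 [|x2 p]] /= hs.
- case: hs => <- _.
  have -> : [set x in [::]] = set0 :> {set V} by apply/setP => x; rewrite !inE.
  exact: step1.
- case: hs => <- <- _.
  have -> : [set x in [:: ((i0,false),false)]] = [set ((i0,false),false)] :> {set V}.
    by apply/setP => x; rewrite !inE.
  exact: step2.
- case: hs => <- <- hr.
  have vr : v \in rest by rewrite hr mem_cat mem_head orbT.
  have ev : v = (v.1,false) by move: vr; rewrite mem_rest; case: (v) => y [] /=; rewrite ?andbF.
  have U := sx_uniq; rewrite /sx hr -cat_cons -cat_cons cat_uniq in U.
  case/and3P: U => _ /hasPn /(_ v (mem_head _ _)) + _; rewrite ev => vn.
  apply: (@step3 _ i0) => //.
  + move=> u; rewrite inE => uin; rewrite -sx_core /sx hr.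
    by rewrite -cat_cons -cat_cons mem_cat uin.
  + by rewrite inE mem_head.
  + by rewrite inE !in_cons eqxx orbT.
  + by rewrite inE.
Qed.

Lemma sx_output : degree_output sx = kkl_core k.
Proof. apply/setP => u; rewrite /degree_output /kkl_core inE [in RHS]inE; exact: sx_core. Qed.
End Exec.

Lemma sum_by_leaf (g : bool -> nat) : (\sum_(u : V) g u.2 = (2*k) * (g true + g false))%N.
Proof.
rewrite -(pair_bigA _ (fun _ b => g b)) /=.
under eq_bigr do rewrite big_bool /=.
rewrite sum_nat_const card_prod card_ord card_bool.
by rewrite [(k * 2)%N]mulnC.
Qed.

Lemma card_V : #|V| = (4 * k)%N.
Proof. by rewrite !card_prod card_ord card_bool -mulnA mulnC. Qed.

Lemma core_inter u : #|Nc E u :&: kkl_core k| = (if u.2 then 1 else k.+1)%N.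
Proof.
case: u => y [].
  rewrite Nc_leaf /=.
  have -> : [set (y, true); (y, false)] :&: kkl_core k = [set (y,false)]; last by rewrite cards1.
  by apply/setP => -[z l]; rewrite !inE !xpair_eqE; case: l; rewrite /= ?tf ?andbF ?andbT ?orbF.
rewrite Nc_core /=.
have -> : ((y, true) |: ((y, false) |: side (~~ y.2))) :&: kkl_core k = (y,false) |: side (~~ y.2).
  apply/setP => -[z l]; rewrite !inE !xpair_eqE; case: l; rewrite /= ?tf ?ft ?andbF ?andbT ?orbF //.
rewrite cardsU1 card_side !inE /=.
case: y => i [] /=; rewrite ?andbF ?andbT ?tf ?ft /= //.
Qed.

Definition leaves : {set V} := [set v | v.2].

Lemma leaf_inter u : #|Nc E u :&: leaves| = 1%N.
Proof.
have -> : Nc E u :&: leaves = [set (u.1,true)]; last by rewrite cards1.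
case: u => y l; apply/setP => -[z m].
rewrite /leaves ?Nc_leaf ?Nc_core; case: l; rewrite ?Nc_leaf ?Nc_core !inE !xpair_eqE;
  case: m; rewrite /= ?tf ?ft ?andbF ?andbT ?orbF //.
Qed.

Lemma cong_core : (0 < k)%N -> cong E (kkl_core k) = (4 * k)%:R / 8%:R + 1.
Proof.
move=> k0; rewrite /cong card_V -natr_sum.
rewrite (eq_bigr (fun u : V => (fun b => if b then 1 else k.+1)%N u.2)); last by move=> u _; exact: core_inter.
rewrite (sum_by_leaf (fun b => if b then 1 else k.+1)%N).
have kn : (k%:R : rat) != 0 by rewrite pnatr_eq0 -lt0n.
rewrite !natrM !natrD /=.
rewrite -[k.+1]addn1 natrD; field; exact: kn.
Qed.

Lemma leaves_dom : dominating E leaves.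
Proof.
apply/eqP/setP => u; rewrite inE in_NS; apply/existsP; exists (u.1,true).
rewrite inE /= Nc_leaf; case: u => y [] /=; by rewrite !inE eqxx ?orbT.
Qed.

Lemma cong_leaves : (0 < k)%N -> cong E leaves = 1.
Proof.
move=> k0; rewrite /cong card_V.
under eq_bigr do rewrite leaf_inter.
rewrite sumr_const card_V.
have kn : ((4 * k)%:R : rat) != 0 by rewrite pnatr_eq0 -lt0n muln_gt0.
by rewrite mulVf.
Qed.

Lemma kkl_sym : symmetric E.
Proof.
move=> [[i b] l] [[j c] m]; rewrite /kkl_edge /= !xpair_eqE.
by rewrite (eq_sym j) (eq_sym c) (eq_sym m) andbCA.
Qed.

Lemma mac_kkl : (0 < k)%N -> mac E = 1.
Proof.
move=> k0; apply/eqP; rewrite eq_le; apply/andP; split.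
  by rewrite -(cong_leaves k0); apply: mac_le leaves_dom.
by apply: mac_ge1; [exact: kkl_sym | rewrite card_V muln_gt0].
Qed.
End K.

Theorem mainTheorem7 :
  (forall (R : realType) (c : R), 1 <= c ->
     exists (T : finType) (e : rel T) (s : seq T),
       [/\ symmetric e, irreflexive e, degree_execution e s &
           c * ratr (mac e) < ratr (cong e (degree_output s))])
  /\
  (forall k : nat, (2 <= k)%N ->
     exists s : seq (kkl_vertex k),
       [/\ degree_execution (@kkl_edge k) s,
           degree_output s = kkl_core k,
           cong (@kkl_edge k) (kkl_core k) = (4 * k)%:R / 8%:R + 1 &
           mac (@kkl_edge k) = 1]).
Proof.
have irr : forall k, irreflexive (@kkl_edge k).
  by move=> k [[i b] l]; rewrite /kkl_edge /= !eqxx !andbF.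
have P2 : forall k : nat, (2 <= k)%N ->
     exists s : seq (kkl_vertex k),
       [/\ degree_execution (@kkl_edge k) s,
           degree_output s = kkl_core k,
           cong (@kkl_edge k) (kkl_core k) = (4 * k)%:R / 8%:R + 1 &
           mac (@kkl_edge k) = 1].
  move=> k k2; have k0 : (0 < k)%N by apply: leq_trans k2.
  exists (@sx k (Ordinal k0)); split.
  - exact: sx_exec.
  - exact: sx_output.
  - exact: cong_core.
  - exact: mac_kkl.
split=> //.
move=> R c c1.
set m := Num.Def.archi_bound c.
have hm : c < m%:R by apply: archi_boundP; apply: le_trans c1.
have k2 : (2 <= (2 * m).+2)%N by [].
have [s [ex out cg mc]] := P2 _ k2.
exists (kkl_vertex (2 * m).+2), (@kkl_edge _), s; split => //.
  exact: kkl_sym.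
rewrite out cg mc rmorph1 mulr1 rmorphD rmorph1 fmorph_div.
rewrite !rmorph_nat.
rewrite (_ : (4 * (2 * m).+2 = 8 * m.+1)%N); last by lia.
rewrite natrM mulrC mulKf ?pnatr_eq0 // -addn1 natrD.
lra.
Qed.
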